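(* Consider the system \[ \begin{aligned} \dot S_h(t)&=\beta_h-C_{vh}\frac{I_v(t)}{N_v(t)}S_h(t)-\mu_hS_h(t),\\ \dot I_h(t)&=C_{vh}\frac{I_v(t-\tau)}{N_v(t-\tau)}S_h(t-\tau)-\mu_hI_h(t),\\ \dot S_v(t)&=\beta_v-C_{hv}I_h(t)S_v(t)-\mu_vS_v(t),\\ \dot I_v(t)&=C_{hv}I_h(t)S_v(t)-\mu_vI_v(t), \end{aligned} \] with $N_v=S_v+I_v$, positive parameters $\beta_h,\beta_v,\mu_h,\mu_v,C_{vh},C_{hv}$ and $\tau\ge 0$. Let $R_0=\sqrt{C_{vh}C_{hv}\beta_h/(\mu_h^2\mu_v)}$, $S_v^0=\beta_v/\mu_v$, and, when $R_0>1$, let $E^*=(S_h^*,I_h^*,S_v^*,I_v^* )^T$ be the unique equilibrium with all components positive. Suppose $R_0>1$, $\theta\in(0,1)$, and let $(S_h(t),I_h(t),S_v(t),I_v(t))$ be the solution through an initial function $\varphi\in D$ satisfying $\limsup_{t\to\infty}I_h(t)\le\theta I_h^*$. Then \[ \liminf_{t\to\infty}S_v(t)\ge \bar S_v:=\frac{\beta_v}{\theta C_{hv}I_h^*+\mu_v}>S_v^*,\qquad \liminf_{t\to\infty}S_h(t)\ge \bar S_h:=\frac{\beta_h}{C_{vh}\left(1-\frac{\bar S_v}{S_v^0}\right)+\mu_h}>S_h^*. \]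
   Context: $C_+=\{\varphi\in C([-\tau,0],\mathbb{R}_+^4):\varphi_3(\theta)+\varphi_4(\theta)>0\ \forall\theta\in[-\tau,0]\}$ with the sup-norm, and $D=\{\varphi\in C_+:\varphi_2(0)>0\}$. The solution through $\varphi$ equals $\varphi$ on $[-\tau,0]$. *)

(* Defs.v *)
From HB Require Import structures.
From mathcomp Require Import all_boot all_order all_algebra.
From mathcomp Require Import all_classical all_reals all_analysis.
Set Implicit Arguments. Unset Strict Implicit. Unset Printing Implicit Defensive.
Import Order.TTheory GRing.Theory Num.Theory.
Import numFieldNormedType.Exports.
Local Open Scope classical_set_scope.
Local Open Scope ring_scope.

Section Model.
Variable R : realType.

Definition limsup_pinfty (f : R -> R) : \bar R :=
  limf_esup (fun t => (f t)%:E) (pinfty_nbhs R).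
Definition liminf_pinfty (f : R -> R) : \bar R :=
  limf_einf (fun t => (f t)%:E) (pinfty_nbhs R).

Definition in_D (tau : R) (p1 p2 p3 p4 : R -> R) : Prop :=
  [/\ [/\ {within `[-tau, 0], continuous p1}, {within `[-tau, 0], continuous p2},
      {within `[-tau, 0], continuous p3} & {within `[-tau, 0], continuous p4}],
      (forall th, -tau <= th <= 0 ->
         (0 <= p1 th) /\ (0 <= p2 th) /\ (0 <= p3 th) /\ (0 <= p4 th) /\ 0 < p3 th + p4 th)
    & 0 < p2 0].

Definition is_solution (bh bv muh muv Cvh Chv tau : R) (p1 p2 p3 p4 : R -> R)
    (Sh Ih Sv Iv : R -> R) : Prop :=
  [/\ (forall th, -tau <= th <= 0 ->
         [/\ Sh th = p1 th, Ih th = p2 th, Sv th = p3 th & Iv th = p4 th]),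
      [/\ {within `[-tau, +oo[, continuous Sh}, {within `[-tau, +oo[, continuous Ih},
          {within `[-tau, +oo[, continuous Sv} & {within `[-tau, +oo[, continuous Iv}]
    & forall t : R, 0 < t ->
      [/\ is_derive t (1:R) Sh (bh - Cvh * (Iv t / (Sv t + Iv t)) * Sh t - muh * Sh t),
          is_derive t (1:R) Ih (Cvh * (Iv (t - tau) / (Sv (t - tau) + Iv (t - tau)))
                              * Sh (t - tau) - muh * Ih t),
          is_derive t (1:R) Sv (bv - Chv * Ih t * Sv t - muv * Sv t)
        & is_derive t (1:R) Iv (Chv * Ih t * Sv t - muv * Iv t)]].

Definition is_equilibrium (bh bv muh muv Cvh Chv Sh Ih Sv Iv : R) : Prop :=
  [/\ bh - Cvh * (Iv / (Sv + Iv)) * Sh - muh * Sh = 0,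
      Cvh * (Iv / (Sv + Iv)) * Sh - muh * Ih = 0,
      bv - Chv * Ih * Sv - muv * Sv = 0
    & Chv * Ih * Sv - muv * Iv = 0].

Definition R0 (bh muh muv Cvh Chv : R) : R :=
  Num.sqrt (Cvh * Chv * bh / (muh ^+ 2 * muv)).

End Model.

(* Main.v *)
Require Import Defs.
From HB Require Import structures.
From mathcomp Require Import all_boot all_order all_algebra.
From mathcomp Require Import all_classical all_reals all_analysis.
Import Order.TTheory GRing.Theory Num.Theory.
Import numFieldNormedType.Exports.
Local Open Scope classical_set_scope.
Local Open Scope ring_scope.
From mathcomp Require Import ring lra.
Section S.
Variable R : realType.
Lemma near_dist (x : R) (P : R -> Prop) : (\forall u \near x, P u) ->
  exists2 d, 0 < d & forall u, `|x - u| < d -> P u.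
Proof.
move=> /nbhs_ballP [d d0 H]; exists d => // u hu; apply: H.
Qed.
Arguments near_dist {x P}.

Lemma der_cont (f : R -> R) (x d : R) : is_derive x (1:R) f d -> {for x, continuous f}.
Proof.
move=> H; apply: differentiable_continuous; apply/derivable1_diffP.
exact: ex_derive.
Qed.

Lemma persist (f df : R -> R) (t1 : R) :
  (forall t, t1 <= t -> is_derive t (1:R) f (df t)) ->
  (forall s, t1 < s -> f s = 0 -> \forall u \near s, 0 < df u) ->
  0 < f t1 -> forall t, t1 <= t -> 0 < f t.
Proof.
move=> Hd Hz f1 t le1t; rewrite ltNge; apply/negP => ft0.
pose Z := [set s | t1 <= s <= t /\ f s <= 0].
have Zt : Z t by split => //; rewrite le1t lexx.
have Zne : Z !=set0 by exists t.
have Zlb : lbound Z t1 by move=> s [/andP[]].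
have hinf : has_lbound Z by exists t1.
pose s0 := inf Z.
have s0lb : forall s, Z s -> s0 <= s by move=> s Zs; exact: ge_inf.
have t1s0 : t1 <= s0 by exact: lb_le_inf.
have s0t : s0 <= t by exact: s0lb.
have cs0 : {for s0, continuous f} by apply: der_cont; apply: Hd.
have fs0le : f s0 <= 0.
  rewrite leNgt; apply/negP => fs0.
  have [d d0 Hdd] := near_dist (cvgr_gt _ cs0 _ fs0).
  have [e Ze he] := inf_adherent d0 (conj Zne hinf).
  have := s0lb _ Ze => s0e.
  have : 0 < f e by apply: Hdd; rewrite ler0_norm ?subr_le0 // opprB ltrBlDl.
  by case: Ze => _ /[swap] /lt_le_trans /[apply]; rewrite ltxx.
have fs0ge : 0 <= f s0.
  rewrite leNgt; apply/negP => fs0.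
  have t1s0' : t1 < s0 by rewrite lt_neqAle t1s0 andbT; apply/eqP => E; move: f1; rewrite E ltNge ltW.
  have [d d0 Hdd] := near_dist (cvgr_lt _ cs0 _ fs0).
  pose m := Num.min d (s0 - t1).
  have m0 : 0 < m by rewrite lt_min d0 subr_gt0.
  have md : m <= d by rewrite ge_min lexx.
  have ms : m <= s0 - t1 by rewrite ge_min lexx orbT.
  have : Z (s0 - m / 2).
    split; first by apply/andP; split; lra.
    apply: ltW; apply: Hdd.
    rewrite ger0_norm; lra.
  move/s0lb; lra.
have fs00 : f s0 = 0 by apply/eqP; rewrite eq_le fs0le fs0ge.
have t1s0' : t1 < s0 by rewrite lt_neqAle t1s0 andbT; apply/eqP => E; move: f1; rewrite E fs00 ltxx.
have [d d0 Hdd] := near_dist (Hz _ t1s0' fs00).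
pose m := Num.min d (s0 - t1).
have m0 : 0 < m by rewrite lt_min d0 subr_gt0.
have md : m <= d by rewrite ge_min lexx.
have ms : m <= s0 - t1 by rewrite ge_min lexx orbT.
pose s := s0 - m / 2.
have ss0 : s < s0 by rewrite /s; lra.
have t1s : t1 < s by rewrite /s; lra.
have [c /andP [] cl cr] : exists2 c, c \in `]s, s0[ & f s0 - f s = df c * (s0 - s).
  apply: MVT => //.
    by move=> x; rewrite in_itv /= => /andP [sx _]; apply: Hd; apply: ltW (lt_trans t1s sx).
  apply: continuous_in_subspaceT => x; rewrite inE /= in_itv /= => /andP [sx _].
  by apply: der_cont; apply: Hd; apply: le_trans sx; apply: ltW.
rewrite !bnd_simp in cl cr.
move=> E.
have dc : 0 < df c.
  apply: Hdd; rewrite ger0_norm /s in cl *; lra.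
have fs : f s < 0.
  have : 0 < df c * (s0 - s) by rewrite mulr_gt0 // subr_gt0.
  rewrite -E fs00; lra.
have Zs : Z s by split; [apply/andP; split; lra | exact: ltW].
by move: (s0lb _ Zs); rewrite leNgt ss0.
Qed.

Lemma near_gt (s T : R) : T < s -> \forall u \near s, T < u.
Proof. by move=> Ts; apply: (cvgr_gt (f:=id) s cvg_id). Qed.

Lemma evlow (f df : R -> R) (T b B : R) : 0 < B ->
  (forall t, T <= t -> is_derive t (1:R) f (df t)) ->
  (forall t, T <= t -> b - B * f t <= df t) ->
  forall eta, 0 < eta -> exists T2, forall t, T2 <= t -> b / B - eta < f t.
Proof.
move=> B0 Hd Hineq eta eta0.
have [t2 Tt2 ft2] : exists2 t2, T <= t2 & b / B - eta < f t2.
  pose L := (`|f T - b / B| + 1) / (B * eta).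
  have BL : B * eta * L = `|f T - b / B| + 1.
    by rewrite /L mulrC -mulrA mulVf ?mulr1 // gt_eqF // mulr_gt0.
  have L0 : 0 < L by rewrite /L divr_gt0 // ?mulr_gt0 // ltr_pwDr.
  have [c /andP [] cl cr] : exists2 c, c \in `]T, T + L[ & f (T + L) - f T = df c * (T + L - T).
    apply: MVT; first by lra.
      by move=> x; rewrite in_itv /= => /andP [sx _]; apply: Hd; apply: ltW.
    apply: continuous_in_subspaceT => x; rewrite inE /= in_itv /= => /andP [sx _].
    by apply: der_cont; apply: Hd.
  rewrite !bnd_simp in cl cr.
  rewrite (_ : T + L - T = L); last by lra.
  move=> E.
  have [fc|fc] := ltP (b / B - eta) (f c).
    by exists c => //; apply: ltW.
  exists (T + L); first by lra.
  have h1 : B * eta <= df c.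
    apply: le_trans (Hineq _ (ltW cl)).
    have : B * f c <= B * (b / B - eta) by rewrite ler_pM2l.
    rewrite mulrBr mulrCA mulfV ?gt_eqF // mulr1; lra.
  have h2 : B * eta * L <= df c * L by rewrite ler_pM2r.
  have h3 := ler_norm (f T - b / B).
  have h4 : - (f T - b / B) <= `|f T - b / B| by rewrite -normrN ler_norm.
  lra.
have := @persist (fun t => f t - (b / B - eta)) df t2.
have Hd' : forall t, t2 <= t -> is_derive t (1:R) (fun t => f t - (b / B - eta)) (df t).
  move=> t tt; have := Hd t (le_trans Tt2 tt) => Hdt.
  by rewrite -[df t]subr0; apply: is_deriveB.
move=> /(_ Hd') H.
exists t2 => t tt.
have : 0 < f t - (b / B - eta); last by lra.
apply: H => //; last by lra.
move=> s st2 /eqP; rewrite subr_eq0 => /eqP fs.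
have cs : {for s, continuous f} by apply: der_cont; apply: Hd; apply: ltW (le_lt_trans Tt2 st2).
have fsl : f s < b / B by lra.
have K1 : \forall u \near s, f u < b / B by exact: (cvgr_lt _ cs _ fsl).
have K2 : \forall u \near s, T < u by exact: (@near_gt s T (le_lt_trans Tt2 st2)).
near=> u.
have h1 : f u < b / B by near: u; exact: K1.
have h2 : T < u by near: u; exact: K2.
apply: lt_le_trans (Hineq _ (ltW h2)).
have : f u * B < b by rewrite -ltr_pdivlMr.
lra.
Unshelve. all: by end_near.
Qed.

Lemma right_pt (P : R -> Prop) : (\forall u \near 0^'+, P u) ->
  exists2 d, 0 < d & forall u, 0 < u < d -> P u.
Proof.
rewrite near_withinE => /near_dist [d d0 H]; exists d => // u /andP [u0 ud].
by apply: H => //; rewrite sub0r normrN gtr0_norm.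
Qed.
Arguments right_pt {P}.

Lemma start_pos (f df c : R -> R) (b c0 : R) : 0 < b ->
  {within `[0, +oo[, continuous f} -> 0 <= f 0 ->
  (forall t : R, 0 < t -> is_derive t (1:R) f (df t)) ->
  (forall t : R, 0 < t -> df t = b - c t * f t) ->
  c u @[u --> 0^'+] --> c0 ->
  exists2 t1, 0 < t1 & 0 < f t1.
Proof.
move=> b0 Hc f0 Hd Hdf cc.
have cf : f x @[x --> 0^'+] --> f 0 := ((continuous_within_itvcyP 0 f).1 Hc).2.
have [fp|fz] := ltP 0 (f 0).
  have [d d0 H] := right_pt (cvgr_gt _ cf _ fp).
  exists (d / 2); first by rewrite divr_gt0.
  apply: H; apply/andP; split; [rewrite divr_gt0 // | lra].
have fz' : f 0 = 0 by apply/eqP; rewrite eq_le fz f0.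
pose M := `|c0| + 1.
have M0 : 0 < M by rewrite /M ltr_pwDr.
pose e := b / (2 * M).
have e0 : 0 < e by rewrite /e divr_gt0 // mulr_gt0.
have H : \forall u \near 0^'+, [/\ f u < e, - e < f u, c u < M & - M < c u].
  near=> u; split; near: u.
  - by apply: (cvgr_lt _ cf); rewrite fz'.
  - by apply: (cvgr_gt _ cf); rewrite fz' oppr_lt0.
  - apply: (cvgr_lt _ cc); rewrite /M; have := ler_norm c0; lra.
  - apply: (cvgr_gt _ cc); rewrite /M; have := ler_norm (- c0); rewrite normrN; lra.
have [d d0 Hd'] := right_pt H.
pose x := d / 2.
have x0 : 0 < x by rewrite /x divr_gt0.
have [xi /andP [] cl cr] : exists2 xi, xi \in `]0, x[ & f x - f 0 = df xi * (x - 0).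
  apply: MVT => //.
    by move=> y; rewrite in_itv /= => /andP [y0 _]; apply: Hd.
  apply: continuous_subspaceW Hc => y /=; rewrite !in_itv /= => /andP [y0 _].
  by rewrite y0.
rewrite !bnd_simp in cl cr.
have [h1 h2 h3 h4] : [/\ f xi < e, - e < f xi, c xi < M & - M < c xi].
  by apply: Hd'; apply/andP; split; rewrite /x in cr *; lra.
have hc : `|c xi| < M by rewrite ltr_norml h3 h4.
have hf : `|f xi| < e by rewrite ltr_norml h1 h2.
have hcf : `|c xi * f xi| < M * e.
  by rewrite normrM; apply: ltr_pM.
have Me : M * e = b / 2 by rewrite /e; field; rewrite gt_eqF.
have : c xi * f xi < b / 2 by apply: le_lt_trans (ler_norm _) _; rewrite -Me.
rewrite fz' subr0 (Hdf _ cl) => K E.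
exists x => //.
have : 0 < (b - c xi * f xi) * (x - 0) by rewrite subr0 mulr_gt0 // ; lra.
rewrite -E; lra.
Unshelve. all: by end_near.
Qed.

Lemma ev_pos (f c : R -> R) (b c0 : R) : 0 < b ->
  {within `[0, +oo[, continuous f} -> 0 <= f 0 ->
  (forall t : R, 0 < t -> is_derive t (1:R) f (b - c t * f t)) ->
  (forall t : R, 0 < t -> {for t, continuous c}) ->
  c u @[u --> 0^'+] --> c0 ->
  exists2 t1 : R, 0 < t1 & forall t : R, t1 <= t -> 0 < f t.
Proof.
move=> b0 Hc f0 Hd Hcc cc.
have [t1 t10 ft1] := @start_pos f (fun t => b - c t * f t) c b c0 b0 Hc f0 Hd (fun _ _ => erefl) cc.
exists t1 => //.
apply: (@persist f (fun t => b - c t * f t)) => //.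
  by move=> t tt; apply: Hd; apply: lt_le_trans tt.
move=> s st fs0.
have s0 : 0 < s by apply: lt_trans st.
have cf : {for s, continuous f} by apply: der_cont; apply: Hd.
have H : (fun u => b - c u * f u) @ s --> b - c s * f s.
  exact: (cvgB (cvg_cst b) (cvgM (Hcc _ s0) cf)).
rewrite fs0 mulr0 subr0 in H.
exact: (cvgr_gt _ H _ b0).
Qed.
Lemma limsup_ev (f : R -> R) a : (limsup_pinfty f <= a%:E)%E ->
  forall e, 0 < e -> \forall t \near +oo, f t < a + e.
Proof.
move=> H e e0.
have : (limsup_pinfty f < (a + e)%:E)%E.
  by apply: (le_lt_trans H); rewrite lte_fin ltrDl.
rewrite /limsup_pinfty limf_esupE => /ereal_inf_lt [y [V FV <-]] Hy.
case: FV => M [Mr HM]; exists M; split => // t /HM Vt.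
rewrite -lte_fin; apply: le_lt_trans Hy.
by apply: ereal_sup_ge; exists ((f t)%:E) => //; exists t.
Qed.

Lemma liminf_ev (f : R -> R) a :
  (forall e, 0 < e -> \forall t \near +oo, a - e < f t) ->
  (a%:E <= liminf_pinfty f)%E.
Proof.
move=> H; apply/lee_subgt0Pr => e e0.
rewrite /liminf_pinfty limf_einfE; apply: ereal_sup_ge.
have [M [Mr HM]] := H e e0.
exists (ereal_inf ((fun t => (f t)%:E) @` [set t | M < t])).
  by exists [set t | M < t] => //; exists M; split.
apply: le_ereal_inf_tmp => _ [t /HM Ht <-].
by rewrite -EFinD lee_fin ltW.
Qed.
End S.

Theorem lemma2 (R : realType) (bh bv muh muv Cvh Chv tau : R)
  (hbh : 0 < bh) (hbv : 0 < bv) (hmuh : 0 < muh) (hmuv : 0 < muv)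
  (hCvh : 0 < Cvh) (hChv : 0 < Chv) (htau : 0 <= tau)
  (hR0 : 1 < R0 bh muh muv Cvh Chv)
  (Shs Ihs Svs Ivs : R)
  (hEpos : [/\ 0 < Shs, 0 < Ihs, 0 < Svs & 0 < Ivs])
  (hEeq : is_equilibrium bh bv muh muv Cvh Chv Shs Ihs Svs Ivs)
  (theta : R) (htheta : 0 < theta < 1)
  (p1 p2 p3 p4 : R -> R) (hD : in_D tau p1 p2 p3 p4)
  (Sh Ih Sv Iv : R -> R)
  (hsol : is_solution bh bv muh muv Cvh Chv tau p1 p2 p3 p4 Sh Ih Sv Iv)
  (hlimsup : (limsup_pinfty Ih <= (theta * Ihs)%:E)%E) :
  let Svbar := bv / (theta * Chv * Ihs + muv) in
  let Shbar := bh / (Cvh * (1 - Svbar / (bv / muv)) + muh) in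
  [/\ (liminf_pinfty Sv >= Svbar%:E)%E, Svbar > Svs,
      (liminf_pinfty Sh >= Shbar%:E)%E & Shbar > Shs].
Proof.
move=> Svbar Shbar.
case: hEpos => Shs0 Ihs0 Svs0 Ivs0.
case: hEeq => e1 e2 e3 e4.
case/andP: htheta => th0 th1.
pose S0 := bv / muv.
pose A := theta * Chv * Ihs + muv.
have A0 : muv < A by rewrite /A ltrDr !mulr_gt0.
have SvbarA : Svbar * A = bv by rewrite /Svbar -/A; field; apply: lt0r_neq0; exact: lt_trans hmuv A0.
have S0m : S0 * muv = bv by rewrite /S0; field; apply: lt0r_neq0.
have Svbar0 : 0 < Svbar by rewrite /Svbar -/A divr_gt0 //; exact: lt_trans hmuv A0.
have S00 : 0 < S0 by rewrite /S0 divr_gt0.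
have ChI : theta * Chv * Ihs < Chv * Ihs.
  by rewrite -mulrA gtr_pMl ?mulr_gt0.
have Svbar_gt : Svs < Svbar.
  rewrite ltNge; apply/negP => H.
  have : Svbar * A <= Svs * A by rewrite ler_pM2r //; lra.
  have : Svs * A < Svs * (Chv * Ihs + muv) by rewrite ltr_pM2l // /A; lra.
  lra.
have SvbarS0 : Svbar < S0.
  rewrite ltNge; apply/negP => H.
  have : S0 * A <= Svbar * A by rewrite ler_pM2r //; lra.
  have : S0 * muv < S0 * A by rewrite ltr_pM2l.
  lra.
have Nseq : Svs + Ivs = S0.
  rewrite /S0; apply: (@mulIf _ muv); first exact: lt0r_neq0.
  rewrite mulfVK ?lt0r_neq0 //; lra.
have qs : Ivs / (Svs + Ivs) = 1 - Svs / S0.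
  rewrite Nseq; apply: (@mulIf _ S0); first exact: lt0r_neq0.
  rewrite mulfVK ?lt0r_neq0 // mulrBl mul1r mulfVK ?lt0r_neq0 //; lra.
have rr : Svs / S0 < Svbar / S0 by rewrite ltr_pM2r // invr_gt0.
have r1 : Svbar / S0 < 1 by rewrite ltr_pdivrMr // mul1r.
pose D := Cvh * (1 - Svbar / S0) + muh.
have D0 : 0 < D by rewrite /D addr_gt0 // mulr_gt0 // subr_gt0.
have ShbarD : Shbar * D = bh by rewrite /Shbar -/S0 -/D mulfVK ?lt0r_neq0.
have ShsE : Shs * (Cvh * (1 - Svs / S0) + muh) = bh by rewrite -qs; lra.
have Shbar_gt : Shs < Shbar.
  have DD : D < Cvh * (1 - Svs / S0) + muh by rewrite /D ltrD2r ltr_pM2l //; lra.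
  rewrite ltNge; apply/negP => H.
  have : Shbar * D <= Shs * D by rewrite ler_pM2r.
  have : Shs * D < Shs * (Cvh * (1 - Svs / S0) + muh) by rewrite ltr_pM2l.
  lra.
case: hD => _ Hpos p20.
case: hsol => Hinit [cSh cIh cSv cIv] Hder.
have z0 : - tau <= (0:R) <= 0 by rewrite lexx andbT oppr_le0.
have [i1 i2 i3 i4] := Hinit 0 z0.
have [q1 [q2 [q3 [q4 q5]]]] := Hpos 0 z0.
pose N := fun t => Sv t + Iv t.
have dSh : forall t : R, 0 < t -> is_derive t (1:R) Sh (bh - (Cvh * (Iv t / N t) + muh) * Sh t).
  by move=> t t0; have [h _ _ _] := Hder t t0; by eapply is_derive_eq; [exact: h | rewrite /N; ring].
have dIh : forall t : R, 0 < t -> is_derive t (1:R) Ih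
    (Cvh * (Iv (t - tau) / (Sv (t - tau) + Iv (t - tau))) * Sh (t - tau) - muh * Ih t).
  by move=> t t0; have [_ h _ _] := Hder t t0.
have dSv : forall t : R, 0 < t -> is_derive t (1:R) Sv (bv - (Chv * Ih t + muv) * Sv t).
  by move=> t t0; have [_ _ h _] := Hder t t0; by eapply is_derive_eq; [exact: h | ring].
have dIv : forall t : R, 0 < t -> is_derive t (1:R) Iv (Chv * Ih t * Sv t - muv * Iv t).
  by move=> t t0; have [_ _ _ h] := Hder t t0.
have dN : forall t : R, 0 < t -> is_derive t (1:R) N (bv - muv * N t).
  move=> t t0; have h := is_deriveD (dSv t t0) (dIv t t0).
  by eapply is_derive_eq; [exact: h | rewrite /N; ring].
have W : forall f : R -> R, {within `[-tau, +oo[, continuous f} -> {within `[0, +oo[, continuous f}.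
  move=> f; apply: continuous_subspaceW.
  by move=> x; rewrite /= !in_itv /= !andbT => x0; apply: le_trans x0; rewrite oppr_le0.
have cSh0 := W _ cSh.
have cIh0 := W _ cIh.
have cSv0 := W _ cSv.
have cIv0 := W _ cIv.
have cN0 : {within `[0, +oo[, continuous N} := within_continuousD cSv0 cIv0.
have rl : forall f : R -> R, {within `[0, +oo[, continuous f} -> f x @[x --> 0^'+] --> f 0.
  by move=> f cf; exact: ((continuous_within_itvcyP 0 f).1 cf).2.
have N0 : 0 < N 0 by rewrite /N i3 i4.
have Npos : forall t : R, 0 < t -> 0 < N t.
  have [d d0 Hd] := @right_pt R _ (cvgr_gt _ (rl N cN0) _ N0).
  have Nd : 0 < N (d / 2) by apply: Hd; apply/andP; split; [rewrite divr_gt0 // | lra].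
  have P := @persist R N (fun t => bv - muv * N t) (d / 2).
  move=> t t0; have [td|td] := ltP t d; first by apply: Hd; rewrite t0 td.
  apply: P => //; last by lra.
    by move=> u du; apply: dN; apply: lt_le_trans du; rewrite divr_gt0.
  move=> s ds Ns.
  have s0 : 0 < s by apply: lt_trans ds; rewrite divr_gt0.
  have H : (fun u => bv - muv * N u) @ s --> bv - muv * N s.
    exact: (cvgB (cvg_cst bv) (cvgM (cvg_cst muv) (@der_cont R _ _ _ (dN s s0)))).
  rewrite Ns mulr0 subr0 in H.
  exact: (cvgr_gt _ H _ hbv).
have [tSv tSv0 Svp] : exists2 t1 : R, 0 < t1 & forall t : R, t1 <= t -> 0 < Sv t.
  apply: (@ev_pos R Sv (fun t => Chv * Ih t + muv) bv (Chv * Ih 0 + muv)) => //.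
  - by rewrite i3.
  - by move=> t t0; exact: (cvgD (cvgM (cvg_cst Chv) (@der_cont R _ _ _ (dIh t t0))) (cvg_cst muv)).
  - exact: (cvgD (cvgM (cvg_cst Chv) (rl Ih cIh0)) (cvg_cst muv)).
have [tSh tSh0 Shp] : exists2 t1 : R, 0 < t1 & forall t : R, t1 <= t -> 0 < Sh t.
  apply: (@ev_pos R Sh (fun t => Cvh * (Iv t / N t) + muh) bh (Cvh * (Iv 0 / N 0) + muh)) => //.
  - by rewrite i1.
  - move=> t t0.
    have NV : (fun x => (N x)^-1) @ t --> (N t)^-1.
      by apply: cvgV; [exact: lt0r_neq0 (Npos t t0) | exact: (@der_cont R _ _ _ (dN t t0))].
    exact: (cvgD (cvgM (cvg_cst Cvh) (cvgM (@der_cont R _ _ _ (dIv t t0)) NV)) (cvg_cst muh)).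
  - have NV : (fun x => (N x)^-1) @ 0^'+ --> (N 0)^-1.
      by apply: cvgV; [exact: lt0r_neq0 N0 | exact: rl N cN0].
    exact: (cvgD (cvgM (cvg_cst Cvh) (cvgM (rl Iv cIv0) NV)) (cvg_cst muh)).
have SvL : forall g, 0 < g -> exists T : R, forall t, T <= t -> Svbar - g < Sv t.
  move=> g g0.
  pose eps := g * A / (2 * Chv * Svbar).
  have Apos : 0 < A by exact: lt_trans hmuv A0.
  have eps0 : 0 < eps by rewrite /eps; apply: divr_gt0; [exact: mulr_gt0 | apply: mulr_gt0 => //; exact: mulr_gt0].
  have Seps : Svbar * Chv * eps = g * A / 2.
    by rewrite /eps; field; rewrite !lt0r_neq0 //; lra.
  pose B := A + Chv * eps.
  have B0 : 0 < B by rewrite /B; apply: addr_gt0 => //; exact: mulr_gt0.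
  have [M [Mr HM]] := limsup_ev R Ih (theta * Ihs) hlimsup eps eps0.
  pose T := Num.max (M + 1) tSv.
  have TM : M + 1 <= T by rewrite le_max lexx.
  have Tt : tSv <= T by rewrite le_max lexx orbT.
  have T0 : 0 < T by apply: lt_le_trans Tt.
  have Hd' : forall t : R, T <= t -> is_derive t (1:R) Sv (bv - (Chv * Ih t + muv) * Sv t).
    by move=> t tT; apply: dSv; apply: lt_le_trans tT.
  have Hineq : forall t, T <= t -> bv - B * Sv t <= bv - (Chv * Ih t + muv) * Sv t.
    move=> t tT.
    have sp := Svp t (le_trans Tt tT).
    have ih : Ih t < theta * Ihs + eps by apply: HM; lra.
    have : Chv * Ih t <= Chv * (theta * Ihs + eps) by rewrite ler_pM2l // ltW.
    move=> h.
    have : (Chv * Ih t + muv) * Sv t <= B * Sv t.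
      by rewrite ler_pM2r // /B /A; lra.
    lra.
  have HT2 := @evlow R Sv (fun t => bv - (Chv * Ih t + muv) * Sv t) T bv B B0 Hd' Hineq.
  have g2 : 0 < g / 2 by rewrite divr_gt0.
    have [T2 HT3] := HT2 _ g2.
    have hB : Svbar - g / 2 < bv / B.
      rewrite ltr_pdivlMr // /B.
      have : 0 < g * Chv * eps by apply: mulr_gt0 => //; exact: mulr_gt0.
      lra.
    by exists T2 => t tT; have := HT3 t tT; lra.
split => //.
- apply: liminf_ev => g g0.
  have [T HT] := SvL g g0.
  exists T; split; first exact: num_real.
  by move=> x /ltW; apply: HT.
- apply: liminf_ev => g g0.
  pose del := g * D / (2 * Shbar * Cvh).
  have Shbar0 : 0 < Shbar by apply: lt_trans Shbar_gt.
  have del0 : 0 < del.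
    by rewrite /del; apply: divr_gt0; [exact: mulr_gt0 | apply: mulr_gt0 => //; exact: mulr_gt0].
  have Sdel : Shbar * Cvh * del = g * D / 2.
    by rewrite /del; field; rewrite !lt0r_neq0.
  pose qmax := 1 - Svbar / S0 + del.
  pose B := Cvh * qmax + muh.
  have Beq : B = D + Cvh * del by rewrite /B /qmax /D; ring.
  have B0 : 0 < B by rewrite Beq; apply: addr_gt0 => //; exact: mulr_gt0.
  pose a := del * (S0 * S0) / (S0 + Svbar).
  have a0 : 0 < a.
    by rewrite /a; apply: divr_gt0; [apply: mulr_gt0 => //; exact: mulr_gt0 | exact: addr_gt0].
  have aeq : a * (S0 + Svbar) = del * (S0 * S0).
    by rewrite /a mulfVK // lt0r_neq0 // addr_gt0.
  have [T3 HT3] := SvL a a0.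
  have HdN : forall t : R, 1 <= t -> is_derive t (1:R) (fun t => - N t) (- (bv - muv * N t)).
    by move=> t t1; apply: is_deriveN; apply: dN; apply: lt_le_trans t1.
  have HiN : forall t : R, 1 <= t -> - bv - muv * (- N t) <= - (bv - muv * N t).
    by move=> t _; lra.
  have [T4 HT4] := @evlow R (fun t => - N t) (fun t => - (bv - muv * N t)) 1 (- bv) muv hmuv HdN HiN a a0.
  have bS0 : - bv / muv = - S0 by rewrite /S0 mulNr.
  pose T := Num.max (Num.max T3 T4) (Num.max (Num.max tSh tSv) 1).
  have T3T : T3 <= T by rewrite !le_max lexx.
  have T4T : T4 <= T by rewrite !le_max lexx orbT.
  have tShT : tSh <= T by rewrite !le_max lexx !orbT.
  have tSvT : tSv <= T by rewrite !le_max lexx !orbT.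
  have T1 : 1 <= T by rewrite !le_max lexx !orbT.
  have T0 : 0 < T by apply: lt_le_trans T1.
  pose k := Svbar / S0 - del.
  have kS0 : k * S0 = Svbar - del * S0 by rewrite /k mulrBl divfK // lt0r_neq0.
  have kaa : k * a + a <= del * S0.
    rewrite -(ler_pM2r S00).
    have e : k * a * S0 = a * (k * S0) by ring.
    rewrite kS0 in e.
    have : 0 < a * del * S0 by apply: mulr_gt0 => //; exact: mulr_gt0.
    lra.
  have qb : forall t : R, T <= t -> Iv t / N t <= qmax.
    move=> t tT.
    have Np := Npos t (lt_le_trans T0 tT).
    have Sp := Svp t (le_trans tSvT tT).
    have Sl := HT3 t (le_trans T3T tT).
    have Nu := HT4 t (le_trans T4T tT).
    rewrite bS0 in Nu.
    have Nu' : N t <= S0 + a by clear -Nu; lra.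
    have kN : k * N t <= Sv t.
      have [kp|kn] := ltP 0 k.
        have h1 : k * N t <= k * (S0 + a) by rewrite ler_pM2l.
        have h2 : k * (S0 + a) = k * S0 + k * a by ring.
        clear -h1 h2 kS0 kaa Sl; lra.
      have : k * N t <= 0 by apply: mulr_le0_ge0 => //; exact: ltW.
      move=> h; clear -h Sp; lra.
    have kd : k <= Sv t / N t by rewrite ler_pdivlMr.
    have -> : Iv t / N t = 1 - Sv t / N t.
      apply: (@mulIf _ (N t)); first exact: lt0r_neq0.
      by rewrite mulrBl mul1r !divfK ?lt0r_neq0 // /N; ring.
    have -> : qmax = 1 - k by rewrite /qmax /k; ring.
    by rewrite lerD2l lerN2.
  have HdSh : forall t : R, T <= t -> is_derive t (1:R) Sh (bh - (Cvh * (Iv t / N t) + muh) * Sh t).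
    by move=> t tT; apply: dSh; apply: lt_le_trans tT.
  have HiSh : forall t : R, T <= t -> bh - B * Sh t <= bh - (Cvh * (Iv t / N t) + muh) * Sh t.
    move=> t tT.
    have sp := Shp t (le_trans tShT tT).
    have h : Cvh * (Iv t / N t) <= Cvh * qmax by rewrite ler_pM2l // qb.
    have : (Cvh * (Iv t / N t) + muh) * Sh t <= B * Sh t.
      by rewrite ler_pM2r // /B lerD2r.
    by move=> H; rewrite lerD2l lerN2.
  have g2 : 0 < g / 2 by rewrite divr_gt0.
  have [T2 HT2] := @evlow R Sh _ T bh B B0 HdSh HiSh _ g2.
  have hB : Shbar - g / 2 < bh / B.
    rewrite ltr_pdivlMr // Beq.
    have : 0 < g * Cvh * del by apply: mulr_gt0 => //; exact: mulr_gt0.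
    move: ShbarD Sdel; clear -g0; move=> ShbarD Sdel H.
    lra.
  exists T2; split; first exact: num_real.
  by move=> x /ltW xT; have := HT2 x xT; move: hB; clear; lra.
Qed.
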